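(* Let $n\in\mathbb{N}$ and $a_0,a_1,a_2\in\mathbb{C}$ with $a_0\neq0$, and let $\lambda_1,\lambda_2$ be the roots of $a_0\lambda^2+a_1\lambda+a_2=0$. If $\Re(\lambda_1)\Re(\lambda_2)\neq0$, then the equation $a_0\bm{x}''+a_1\bm{x}'+a_2\bm{x}=\bm{0}$ (with $\bm{x}\in C^2(\mathbb{R},\mathbb{C}^n)$) is Ulam stable on $\mathbb{R}$, and $\dfrac{1}{|a_0\Re(\lambda_1)\Re(\lambda_2)|}$ is an Ulam constant.
   Context: $\|\cdot\|$ is a norm on $\mathbb{C}^n$. Ulam stability: the equation $\alpha(t)\bm{x}''+\beta(t)\bm{x}'+\gamma(t)\bm{x}=\bm{f}(t)$ is Ulam stable on $I$ if there exists a constant $L>0$ such that for every $\varepsilon>0$ and every $\bm{\xi}\in C^2(I,\mathbb{C}^n)$ with $\sup_{t\in I}\|\alpha(t)\bm{\xi}''(t)+\beta(t)\bm{\xi}'(t)+\gamma(t)\bm{\xi}(t)-\bm{f}(t)\|\le\varepsilon$, there exists a solution $\bm{x}\in C^2(I,\mathbb{C}^n)$ of the equation with $\sup_{t\in I}\|\bm{\xi}(t)-\bm{x}(t)\|\le L\varepsilon$; such an $L$ is called an Ulam constant for the equation on $I$. $\Re(z)$ denotes the real part of $z$. *)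

(* Defs.v *)
From Stdlib Require Import Reals.
From Coquelicot Require Import Coquelicot.
From mathcomp Require Import ssreflect ssrbool eqtype ssrnat fintype.

Open Scope R_scope.

Definition cvec (n : nat) := 'I_n -> C.

Definition vadd {n} (u v : cvec n) : cvec n := fun i => Cplus (u i) (v i).
Definition vsub {n} (u v : cvec n) : cvec n := fun i => Cminus (u i) (v i).
Definition vscal {n} (c : C) (u : cvec n) : cvec n := fun i => Cmult c (u i).
Definition vzero (n : nat) : cvec n := fun _ => RtoC 0.

Definition is_norm {n} (N : cvec n -> R) : Prop :=
  (forall u v, N (vadd u v) <= N u + N v) /\
  (forall (c : C) u, N (vscal c u) = Cmod c * N u) /\
  (forall u, N u = 0 -> u = vzero n).

(* x' = x1 and x1' = x2 on R (derivatives of C^n-valued functions of a real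
   variable, coordinatewise, C viewed as a normed R-module), and x2 is
   continuous: i.e. x is in C^2(R, C^n) with derivatives x1, x2. *)
Definition C2_with {n} (x x1 x2 : R -> cvec n) : Prop :=
  (forall t i, @is_derive R_AbsRing C_R_NormedModule (fun s => x s i) t (x1 t i)) /\
  (forall t i, @is_derive R_AbsRing C_R_NormedModule (fun s => x1 s i) t (x2 t i)) /\
  (forall t i, continuous (fun s => x2 s i) t).

Definition lhs {n} (alpha beta gamma : R -> C) (x x1 x2 : R -> cvec n) (t : R)
  : cvec n :=
  vadd (vadd (vscal (alpha t) (x2 t)) (vscal (beta t) (x1 t))) (vscal (gamma t) (x t)).

Definition is_solution {n} (alpha beta gamma : R -> C) (f : R -> cvec n)
  (x : R -> cvec n) : Prop :=
  exists x1 x2, C2_with x x1 x2 /\ forall t, lhs alpha beta gamma x x1 x2 t = f t.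

(* L is an Ulam constant for alpha x'' + beta x' + gamma x = f on I = R,
   w.r.t. the norm N. (sup_t N(..) <= eps  is written  forall t, N(..) <= eps.) *)
Definition UlamConstant {n} (N : cvec n -> R) (alpha beta gamma : R -> C)
  (f : R -> cvec n) (L : R) : Prop :=
  0 < L /\
  forall eps : R, 0 < eps ->
  forall xi xi1 xi2 : R -> cvec n, C2_with xi xi1 xi2 ->
  (forall t, N (vsub (lhs alpha beta gamma xi xi1 xi2 t) (f t)) <= eps) ->
  exists x, is_solution alpha beta gamma f x /\
            forall t, N (vsub (xi t) (x t)) <= L * eps.

Definition UlamStable {n} (N : cvec n -> R) (alpha beta gamma : R -> C)
  (f : R -> cvec n) : Prop :=
  exists L, UlamConstant N alpha beta gamma f L.

(* Main.v *)
Require Import Defs.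
From Stdlib Require Import Reals Lra FunctionalExtensionality ClassicalEpsilon.
From Coquelicot Require Import Coquelicot.
From mathcomp Require Import ssreflect ssrbool eqtype ssrnat fintype.
Open Scope R_scope.
Lemma der_eps {V : NormedModule R_AbsRing} (f : R -> V) t l :
  is_derive f t l -> forall e, 0 < e -> exists d, 0 < d /\ forall u, Rabs (u - t) < d ->
  norm (minus (minus (f u) (f t)) (scal (u - t) l)) <= e * Rabs (u - t).
Proof.
  intros [_ H] e he.
  assert (Hl : is_filter_lim (locally t) t) by (intros P HP; exact HP).
  destruct (H t Hl (mkposreal e he)) as [d Hd].
  exists d; split; [apply cond_pos|].
  intros u Hu. apply (Hd u). exact Hu.
Qed.

Lemma eps_der {V : NormedModule R_AbsRing} (f : R -> V) t l :
  (forall e, 0 < e -> exists d, 0 < d /\ forall u, Rabs (u - t) < d ->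
  norm (minus (minus (f u) (f t)) (scal (u - t) l)) <= e * Rabs (u - t)) ->
  is_derive f t l.
Proof.
  intros H. split; [apply is_linear_scal_l|].
  intros x Hx. apply (@is_filter_lim_locally_unique _ R_NormedModule) in Hx. subst x.
  intros eps. destruct (H eps (cond_pos eps)) as [d [hd Hd]].
  exists (mkposreal d hd). intros u Hu. apply Hd. exact Hu.
Qed.
Lemma Cminus_minus (x y : C) : @minus C_R_NormedModule x y = Cminus x y.
Proof. reflexivity. Qed.
Lemma Cscal_mult (r : R) (z : C) : @scal R_Ring C_R_ModuleSpace r z = Cmult (RtoC r) z.
Proof. destruct z as [a b]. unfold Cmult, RtoC; simpl. unfold scal; simpl. unfold prod_scal; simpl.
  f_equal; unfold scal; simpl; unfold mult; simpl; ring. Qed.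
Lemma Cnorm_mod (z : C) : @norm R_AbsRing C_R_NormedModule z = Cmod z.
Proof. now rewrite Cmod_norm. Qed.
Lemma Cmod_le_sum (z : C) : Cmod z <= Rabs (Re z) + Rabs (Im z).
Proof.
  destruct z as [x y]. unfold Cmod, Re, Im; simpl.
  rewrite <- (sqrt_Rsqr (Rabs x + Rabs y)).
  - apply sqrt_le_1_alt. unfold Rsqr. 
    assert (0 <= Rabs x) by apply Rabs_pos. assert (0 <= Rabs y) by apply Rabs_pos.
    assert (x * x = Rabs x * Rabs x) by (rewrite <- Rabs_mult; rewrite Rabs_right; [ring| nra]).
    assert (y * y = Rabs y * Rabs y) by (rewrite <- Rabs_mult; rewrite Rabs_right; [ring| nra]).
    nra.
  - pose proof (Rabs_pos x); pose proof (Rabs_pos y); lra.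
Qed.
Lemma im_le_Cmod' (z : C) : Rabs (Im z) <= Cmod z.
Proof. destruct z as [x y]. unfold Cmod, Im; simpl.
  rewrite <- sqrt_Rsqr_abs. apply sqrt_le_1_alt. unfold Rsqr. nra. Qed.
Notation derC f t l := (@is_derive R_AbsRing C_R_NormedModule f t l).

Lemma derR_eps (f : R -> R) t l :
  is_derive f t l -> forall e, 0 < e -> exists d, 0 < d /\ forall u, Rabs (u - t) < d ->
  Rabs (f u - f t - (u - t) * l) <= e * Rabs (u - t).
Proof.
  intros H e he. destruct (der_eps f t l H e he) as [d [hd Hd]].
  exists d; split; [exact hd|]. intros u Hu. specialize (Hd u Hu). exact Hd.
Qed.

Lemma epsR_der (f : R -> R) t l :
  (forall e, 0 < e -> exists d, 0 < d /\ forall u, Rabs (u - t) < d ->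
  Rabs (f u - f t - (u - t) * l) <= e * Rabs (u - t)) -> is_derive f t l.
Proof. intros H. apply eps_der. exact H. Qed.

Lemma derC_eps (f : R -> C) t l :
  derC f t l -> forall e, 0 < e -> exists d, 0 < d /\ forall u, Rabs (u - t) < d ->
  Cmod (Cminus (Cminus (f u) (f t)) (Cmult (RtoC (u - t)) l)) <= e * Rabs (u - t).
Proof.
  intros H e he. destruct (der_eps f t l H e he) as [d [hd Hd]].
  exists d; split; [exact hd|]. intros u Hu. specialize (Hd u Hu).
  rewrite Cnorm_mod Cscal_mult in Hd. exact Hd.
Qed.

Lemma epsC_der (f : R -> C) t l :
  (forall e, 0 < e -> exists d, 0 < d /\ forall u, Rabs (u - t) < d ->
  Cmod (Cminus (Cminus (f u) (f t)) (Cmult (RtoC (u - t)) l)) <= e * Rabs (u - t)) ->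
  derC f t l.
Proof.
  intros H. apply eps_der. intros e he. destruct (H e he) as [d [hd Hd]].
  exists d; split; [exact hd|]. intros u Hu. rewrite Cnorm_mod Cscal_mult. apply Hd; auto.
Qed.

Lemma derC_parts (f : R -> C) t a b :
  is_derive (fun s => Re (f s)) t a -> is_derive (fun s => Im (f s)) t b ->
  derC f t (a, b).
Proof.
  intros Ha Hb. apply epsC_der. intros e he.
  destruct (derR_eps _ _ _ Ha (e/2)) as [d1 [hd1 H1]]; [lra|].
  destruct (derR_eps _ _ _ Hb (e/2)) as [d2 [hd2 H2]]; [lra|].
  exists (Rmin d1 d2); split; [apply Rmin_pos; auto|].
  intros u Hu. specialize (H1 u (Rlt_le_trans _ _ _ Hu (Rmin_l _ _))).
  specialize (H2 u (Rlt_le_trans _ _ _ Hu (Rmin_r _ _))).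
  eapply Rle_trans; [apply Cmod_le_sum|].
  replace (Re (Cminus (Cminus (f u) (f t)) (Cmult (RtoC (u - t)) (a, b))))
    with (Re (f u) - Re (f t) - (u - t) * a) by (unfold Cminus, Cplus, Copp, Cmult, Re, RtoC; simpl; ring).
  replace (Im (Cminus (Cminus (f u) (f t)) (Cmult (RtoC (u - t)) (a, b))))
    with (Im (f u) - Im (f t) - (u - t) * b) by (unfold Cminus, Cplus, Copp, Cmult, Im, RtoC; simpl; ring).
  lra.
Qed.

Lemma derC_Re (f : R -> C) t l : derC f t l -> is_derive (fun s => Re (f s)) t (Re l).
Proof.
  intros H. apply epsR_der. intros e he. destruct (derC_eps f t l H e he) as [d [hd Hd]].
  exists d; split; [exact hd|]. intros u Hu. eapply Rle_trans; [|apply (Hd u Hu)].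
  eapply Rle_trans; [|apply re_le_Cmod]. right. f_equal.
  unfold Cminus, Cplus, Copp, Cmult, Re, RtoC; simpl; ring.
Qed.

Lemma derC_Im (f : R -> C) t l : derC f t l -> is_derive (fun s => Im (f s)) t (Im l).
Proof.
  intros H. apply epsR_der. intros e he. destruct (derC_eps f t l H e he) as [d [hd Hd]].
  exists d; split; [exact hd|]. intros u Hu. eapply Rle_trans; [|apply (Hd u Hu)].
  eapply Rle_trans; [|apply im_le_Cmod']. right. f_equal.
  unfold Cminus, Cplus, Copp, Cmult, Im, RtoC; simpl; ring.
Qed.

Lemma derC_ext (f g : R -> C) t l l' : (forall s, f s = g s) -> l = l' -> derC f t l -> derC g t l'.
Proof. intros H <- Hf. apply (is_derive_ext f g); auto. Qed.

Lemma derR_ext (f g : R -> R) t l l' : (forall s, f s = g s) -> l = l' -> is_derive f t l -> is_derive g t l'.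
Proof. intros H <- Hf. apply (is_derive_ext f g); auto. Qed.

Lemma derC_mult (f g : R -> C) t a b : derC f t a -> derC g t b ->
  derC (fun s => Cmult (f s) (g s)) t (Cplus (Cmult a (g t)) (Cmult (f t) b)).
Proof.
  intros Hf Hg. 
  pose proof (derC_Re _ _ _ Hf) as Rf. pose proof (derC_Im _ _ _ Hf) as If.
  pose proof (derC_Re _ _ _ Hg) as Rg. pose proof (derC_Im _ _ _ Hg) as Ig.
  set (z := Cplus (Cmult a (g t)) (Cmult (f t) b)).
  replace z with (Re z, Im z) by (destruct z; reflexivity).
  apply derC_parts.
  - assert (K := is_derive_minus _ _ _ _ _ (is_derive_mult _ _ _ _ _ Rf Rg Rmult_comm) (is_derive_mult _ _ _ _ _ If Ig Rmult_comm)).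
    refine (derR_ext _ _ _ _ _ _ _ K).
    + intros s. unfold Re, Im, Cmult; simpl. reflexivity.
    + unfold z, Re, Im, Cmult, Cplus; simpl. unfold minus, plus, opp, mult; simpl. ring.
  - assert (K := is_derive_plus _ _ _ _ _ (is_derive_mult _ _ _ _ _ Rf Ig Rmult_comm) (is_derive_mult _ _ _ _ _ If Rg Rmult_comm)).
    refine (derR_ext _ _ _ _ _ _ _ K).
    + intros s. unfold Re, Im, Cmult; simpl. reflexivity.
    + unfold z, Re, Im, Cmult, Cplus; simpl. unfold minus, plus, opp, mult; simpl. ring.
Qed.

Lemma derC_plus (f g : R -> C) t a b : derC f t a -> derC g t b ->
  derC (fun s => Cplus (f s) (g s)) t (Cplus a b).
Proof. intros Hf Hg. exact (is_derive_plus _ _ _ _ _ Hf Hg). Qed.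

Lemma derC_const (c : C) t : derC (fun _ => c) t (RtoC 0).
Proof. exact (@is_derive_const R_AbsRing C_R_NormedModule c t). Qed.

Lemma derC_id t : derC (fun s => RtoC s) t (RtoC 1).
Proof. apply derC_parts; unfold Re, Im, RtoC; simpl.
  - auto_derive; auto.
  - auto_derive; auto. Qed.

Definition ex (mu : C) (t : R) : C :=
  (exp (Re mu * t) * cos (Im mu * t), exp (Re mu * t) * sin (Im mu * t)).

Lemma derC_ex mu t : derC (ex mu) t (Cmult mu (ex mu t)).
Proof.
  set (z := Cmult mu (ex mu t)). replace z with (Re z, Im z) by (destruct z; reflexivity).
  apply derC_parts; unfold z, ex, Re, Im, Cmult; simpl.
  - auto_derive; auto. ring.
  - auto_derive; auto. ring.
Qed.

Lemma Cmod_ex mu t : Cmod (ex mu t) = exp (Re mu * t).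
Proof.
  unfold Cmod, ex; simpl.
  transitivity (sqrt (exp (Re mu * t) ^ 2)).
  - f_equal. pose proof (sin2_cos2 (Im mu * t)). unfold Rsqr in *. simpl.
    set (E := exp (Re mu * t)). set (c := cos (Im mu * t)). set (s := sin (Im mu * t)).
    replace (E * c * (E * c * 1) + E * s * (E * s * 1)) with (E*E*(s*s+c*c)) by ring.
    rewrite H. ring.
  - apply sqrt_pow2. left; apply exp_pos.
Qed.

Lemma ex_inv mu t : Cmult (ex mu t) (ex (Copp mu) t) = RtoC 1.
Proof.
  unfold ex, Cmult, Copp, Re, Im, RtoC; simpl.
  replace (- fst mu * t) with (- (fst mu * t)) by ring.
  replace (- snd mu * t) with (- (snd mu * t)) by ring.
  rewrite cos_neg sin_neg exp_Ropp.
  pose proof (sin2_cos2 (snd mu * t)). unfold Rsqr in *.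
  assert (exp (fst mu * t) <> 0) by (apply Rgt_not_eq, exp_pos).
  f_equal; field_simplify; auto; nra.
Qed.
Lemma vext {n} (u v : cvec n) : (forall i, u i = v i) -> u = v.
Proof. intros H. apply functional_extensionality. exact H. Qed.

Definition unitv {n} (i0 : 'I_n) : cvec n := fun i => if i == i0 then RtoC 1 else RtoC 0.

Section NormFacts.
Context {n : nat} (N : cvec n -> R) (HN : is_norm N).

Lemma N_tri u v : N (vadd u v) <= N u + N v.
Proof. destruct HN as [H _]. apply H. Qed.
Lemma N_scal c u : N (vscal c u) = Cmod c * N u.
Proof. destruct HN as [_ [H _]]. apply H. Qed.
Lemma N_zero : N (vzero n) = 0.
Proof. replace (vzero n) with (vscal (RtoC 0) (vzero n)).
  - rewrite N_scal. rewrite Cmod_0. ring.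
  - apply vext; intros i; unfold vscal, vzero. now rewrite Cmult_0_l. Qed.
Lemma N_nonneg u : 0 <= N u.
Proof.
  assert (E : vzero n = vadd u (vscal (RtoC (-1)) u)).
  { apply vext; intros i; unfold vscal, vzero, vadd. apply injective_projections; unfold RtoC, Cplus, Cmult; simpl; ring. }
  pose proof (N_tri u (vscal (RtoC (-1)) u)). rewrite <- E, N_zero, N_scal, Cmod_R in H.
  rewrite Rabs_Ropp Rabs_R1 in H. lra.
Qed.
Lemma N_sub_sym u v : N (vsub u v) = N (vsub v u).
Proof.
  replace (vsub u v) with (vscal (RtoC (-1)) (vsub v u)).
  - rewrite N_scal Cmod_R Rabs_Ropp Rabs_R1. ring.
  - apply vext; intros i; unfold vscal, vsub. apply injective_projections; unfold RtoC, Cminus, Cplus, Copp, Cmult; simpl; ring.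
Qed.
Lemma N_sub_tri u v w : N (vsub u w) <= N (vsub u v) + N (vsub v w).
Proof.
  replace (vsub u w) with (vadd (vsub u v) (vsub v w)).
  - apply N_tri.
  - apply vext; intros i; unfold vadd, vsub. apply injective_projections; unfold Cminus, Cplus, Copp; simpl; ring.
Qed.
Lemma N_sub0 u : N (vsub u (vzero n)) = N u.
Proof. f_equal. apply vext; intros i; unfold vsub, vzero. apply injective_projections; unfold RtoC, Cminus, Cplus, Copp; simpl; ring. Qed.

Definition trunc (k : nat) (v : cvec n) : cvec n := fun i => if (i < k)%N then v i else RtoC 0.

Lemma UB_trunc k : exists K, 0 <= K /\ forall v B, (forall i, Cmod (v i) <= B) -> N (trunc k v) <= K * B.
Proof.
  induction k as [|k [K [HK IH]]].
  - exists 0; split; [lra|]. intros v B _.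
    replace (trunc 0 v) with (vzero n) by (apply vext; intros i; reflexivity).
    rewrite N_zero. lra.
  - destruct (k < n)%N eqn:Hk.
    + set (i0 := Ordinal Hk).
      exists (K + N (unitv i0)); split; [pose proof (N_nonneg (unitv i0)); lra|].
      intros v B HB.
      replace (trunc k.+1 v) with (vadd (trunc k v) (vscal (v i0) (unitv i0))).
      * eapply Rle_trans; [apply N_tri|]. rewrite N_scal.
        specialize (IH v B HB). pose proof (HB i0). pose proof (N_nonneg (unitv i0)).
        assert (Cmod (v i0) * N (unitv i0) <= B * N (unitv i0)) by (apply Rmult_le_compat_r; auto).
        lra.
      * apply vext; intros i; unfold vadd, vscal, trunc, unitv.
        assert (E : (i == i0) = (nat_of_ord i == k)) by reflexivity.
        rewrite E. case: (ltngtP i k) => Hik.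
        -- rewrite ltnS (ltnW Hik).
           apply injective_projections; unfold RtoC, Cplus, Cmult; simpl; ring.
        -- have -> : (i < k.+1)%N = false by rewrite ltnS leqNgt Hik.
           apply injective_projections; unfold RtoC, Cplus, Cmult; simpl; ring.
        -- rewrite ltnS Hik leqnn.
           have -> : v i = v i0 by f_equal; apply val_inj.
           apply injective_projections; unfold RtoC, Cplus, Cmult; simpl; ring.
    + exists K; split; auto. intros v B HB.
      replace (trunc k.+1 v) with (trunc k v); [apply IH; auto|].
      apply vext; intros i; unfold trunc.
      have h1 : (i < k)%N by apply: (leq_trans (ltn_ord i)); rewrite leqNgt Hk.
      rewrite h1 ltnS ltnW //.
Qed.

Lemma UB : exists K, 0 <= K /\ forall v B, (forall i, Cmod (v i) <= B) -> N v <= K * B.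
Proof.
  destruct (UB_trunc n) as [K [HK H]]. exists K; split; auto.
  intros v B HB. replace v with (trunc n v); [apply H; auto|].
  apply vext; intros i; unfold trunc. rewrite ltn_ord. reflexivity.
Qed.

End NormFacts.
Lemma Cmod_sub_le (z w : C) : Cmod (Cminus z w) <= Rabs (Re z - Re w) + Rabs (Im z - Im w).
Proof. eapply Rle_trans; [apply Cmod_le_sum|]. right. reflexivity. Qed.

Lemma cauchy_C (u : nat -> C) (r : nat -> R) :
  (forall p q, (p <= q)%N -> Cmod (Cminus (u p) (u q)) <= r p) ->
  (forall e, 0 < e -> exists M, forall p, (M <= p)%N -> r p < e) ->
  {l : C | forall p, Cmod (Cminus (u p) l) <= r p}.
Proof.
  intros Hu Hr.
  assert (CR : Cauchy_crit (fun p => Re (u p))).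
  { intros e he. destruct (Hr (e/2)) as [M HM]; [lra|]. exists M. intros a b Ha Hb.
    move/leP: Ha => Ha. move/leP: Hb => Hb.
    unfold R_dist. pose proof (Hu M a Ha). pose proof (Hu M b Hb). pose proof (HM M (leqnn M)).
    pose proof (re_le_Cmod (Cminus (u M) (u a))). pose proof (re_le_Cmod (Cminus (u M) (u b))).
    unfold Cminus, Cplus, Copp, Re in *; simpl in *.
    pose proof (Rabs_triang (fst (u M) + - fst (u a)) (fst (u M) + - fst (u b))).
    replace (fst (u a) - fst (u b)) with (- (fst (u M) + - fst (u a)) + (fst (u M) + - fst (u b))) by ring.
    pose proof (Rabs_triang (- (fst (u M) + - fst (u a))) (fst (u M) + - fst (u b))).
    rewrite Rabs_Ropp in H5. lra. }
  assert (CI : Cauchy_crit (fun p => Im (u p))).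
  { intros e he. destruct (Hr (e/2)) as [M HM]; [lra|]. exists M. intros a b Ha Hb.
    move/leP: Ha => Ha. move/leP: Hb => Hb.
    unfold R_dist. pose proof (Hu M a Ha). pose proof (Hu M b Hb). pose proof (HM M (leqnn M)).
    pose proof (im_le_Cmod' (Cminus (u M) (u a))). pose proof (im_le_Cmod' (Cminus (u M) (u b))).
    unfold Cminus, Cplus, Copp, Im in *; simpl in *.
    replace (snd (u a) - snd (u b)) with (- (snd (u M) + - snd (u a)) + (snd (u M) + - snd (u b))) by ring.
    pose proof (Rabs_triang (- (snd (u M) + - snd (u a))) (snd (u M) + - snd (u b))).
    rewrite Rabs_Ropp in H4. lra. }
  destruct (Rcomplete.R_complete _ CR) as [lr Hlr]. destruct (Rcomplete.R_complete _ CI) as [li Hli].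
  exists (lr, li). intros p. apply Rle_plus_epsilon. intros e he.
  destruct (Hlr (e/2)) as [M1 HM1]; [lra|]. destruct (Hli (e/2)) as [M2 HM2]; [lra|].
  set (q := maxn p (maxn M1 M2)).
  assert (Hq1 : (q >= M1)%coq_nat) by (apply/leP; rewrite /q; apply: leq_trans (leq_maxr _ _); apply leq_maxl).
  assert (Hq2 : (q >= M2)%coq_nat) by (apply/leP; rewrite /q; apply: leq_trans (leq_maxr _ _); apply leq_maxr).
  specialize (HM1 q Hq1). specialize (HM2 q Hq2). unfold R_dist in *.
  pose proof (Hu p q (leq_maxl _ _)).
  replace (Cminus (u p) (lr, li)) with (Cplus (Cminus (u p) (u q)) (Cminus (u q) (lr, li)))
    by (apply injective_projections; unfold Cminus, Cplus, Copp; simpl; ring).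
  eapply Rle_trans; [apply Cmod_triangle|].
  pose proof (Cmod_sub_le (u q) (lr, li)). simpl in H0. unfold Re, Im in *. simpl in *. lra.
Qed.
Lemma inv_lim c e : 0 < e -> exists M, forall p, (M <= p)%N -> c / (INR p + 1) < e.
Proof.
  intros he. destruct (Rle_lt_dec c 0) as [Hc|Hc].
  - exists 0%N. intros p _. pose proof (pos_INR p).
    assert (c / (INR p + 1) <= 0). { unfold Rdiv. apply Rmult_le_0_r; auto. left; apply Rinv_0_lt_compat; lra. }
    lra.
  - destruct (archimed_cor1 (e / c)) as [M [HM HM0]]. { apply Rdiv_lt_0_compat; auto. }
    exists M. intros p Hp. move/leP: Hp => Hp. apply le_INR in Hp.
    assert (0 < INR M) by (apply lt_0_INR; exact HM0).
    assert (/ (INR p + 1) < / INR M) by (apply Rinv_lt_contravar; nra).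
    assert (c * / INR M < e) by (apply (Rmult_lt_reg_r (/c)); [apply Rinv_0_lt_compat; auto|];
      replace (c * / INR M * / c) with (/ INR M) by (field; lra); exact HM).
    unfold Rdiv. nra.
Qed.

Lemma le0_of_lim (X : R) (r : nat -> R) : (forall m, X <= r m) ->
  (forall e, 0 < e -> exists M, forall p, (M <= p)%N -> r p < e) -> X <= 0.
Proof.
  intros H Hr. destruct (Rle_lt_dec X 0) as [h|h]; auto.
  destruct (Hr X h) as [M HM]. specialize (HM M (leqnn M)). specialize (H M). lra.
Qed.

Section LBsec.
Context {n : nat} (N : cvec n -> R) (HN : is_norm N).

Lemma N_sub_le u v : N (vsub u v) <= N u + N v.
Proof.
  replace (vsub u v) with (vadd u (vscal (RtoC (-1)) v)).
  - eapply Rle_trans; [apply (N_tri N HN)|]. rewrite (N_scal N HN) Cmod_R Rabs_Ropp Rabs_R1. lra.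
  - apply vext; intros i; unfold vadd, vscal, vsub. apply injective_projections; unfold RtoC, Cminus, Cplus, Copp, Cmult; simpl; ring.
Qed.

Lemma N_def u : N u = 0 -> u = vzero n.
Proof. destruct HN as [_ [_ H]]. apply H. Qed.

Definition supp (k : nat) (v : cvec n) := forall i : 'I_n, (k <= i)%N -> v i = RtoC 0.

Lemma LB_k k : (k <= n)%N -> exists Cc, 0 < Cc /\ forall v, supp k v -> forall i, Cmod (v i) <= Cc * N v.
Proof.
  induction k as [|k IH]; intros Hkn.
  - exists 1; split; [lra|]. intros v Hv i. rewrite (Hv i (leq0n _)) Cmod_0.
    pose proof (N_nonneg N HN v). lra.
  - destruct (IH (ltnW Hkn)) as [Cc [HCc HIH]].
    set (i0 := Ordinal Hkn). set (e0 := unitv i0).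
    destruct (UB N HN) as [K [HK HUB]].
    assert (D : exists d, 0 < d /\ forall w, supp k w -> d <= N (vsub e0 w)).
    { apply Classical_Prop.NNPP. intros Hno.
      assert (Hex : forall m : nat, exists w, supp k w /\ N (vsub e0 w) < / (INR m + 1)).
      { intros m. apply Classical_Prop.NNPP. intros Hm. apply Hno. exists (/ (INR m + 1)). split.
        - apply Rinv_0_lt_compat. pose proof (pos_INR m). lra.
        - intros w Hw. apply Rnot_lt_le. intros Hlt. apply Hm. exists w. auto. }
      set (ws := fun m => proj1_sig (constructive_indefinite_description _ (Hex m))).
      assert (Hws : forall m, supp k (ws m) /\ N (vsub e0 (ws m)) < / (INR m + 1)).
      { intros m. exact (proj2_sig (constructive_indefinite_description _ (Hex m))). }
      set (r := fun m : nat => (2 * Cc) / (INR m + 1)).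
      assert (Hcau : forall i p q, (p <= q)%N -> Cmod (Cminus (ws p i) (ws q i)) <= r p).
      { intros i p q Hpq.
        assert (Hs : supp k (vsub (ws p) (ws q))).
        { intros j Hj. unfold vsub. rewrite (proj1 (Hws p) j Hj) (proj1 (Hws q) j Hj).
          apply injective_projections; unfold RtoC, Cminus, Cplus, Copp; simpl; ring. }
        pose proof (HIH _ Hs i) as H1. unfold vsub in H1 at 1.
        eapply Rle_trans; [exact H1|].
        pose proof (N_sub_tri N HN (ws p) e0 (ws q)).
        rewrite (N_sub_sym N HN (ws p) e0) in H.
        pose proof (proj2 (Hws p)). pose proof (proj2 (Hws q)).
        move/leP: Hpq => Hpq. apply le_INR in Hpq. pose proof (pos_INR p).
        assert (/ (INR q + 1) <= / (INR p + 1)) by (apply Rinv_le_contravar; lra).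
        unfold r. unfold Rdiv. nra. }
      assert (Hr : forall e, 0 < e -> exists M, forall p, (M <= p)%N -> r p < e).
      { intros e he. apply inv_lim; auto. }
      set (wl := fun i => proj1_sig (cauchy_C (fun m => ws m i) r (Hcau i) Hr)).
      assert (Hwl : forall i m, Cmod (Cminus (ws m i) (wl i)) <= r m).
      { intros i. exact (proj2_sig (cauchy_C (fun m => ws m i) r (Hcau i) Hr)). }
      assert (H0 : N (vsub e0 wl) <= 0).
      { apply (le0_of_lim _ (fun m => (1 + 2 * Cc * K) / (INR m + 1))).
        - intros m. eapply Rle_trans; [apply (N_sub_tri N HN e0 (ws m) wl)|].
          pose proof (proj2 (Hws m)) as Hm1.
          assert (Hm2 : N (vsub (ws m) wl) <= K * r m) by (apply HUB; intros i; apply Hwl).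
          unfold r in Hm2. unfold Rdiv in *.
          replace ((1 + 2 * Cc * K) * / (INR m + 1)) with (/ (INR m + 1) + K * (2 * Cc * / (INR m + 1))) by ring.
          lra.
        - intros e he. apply inv_lim; auto. }
      pose proof (N_nonneg N HN (vsub e0 wl)).
      assert (Ez : vsub e0 wl = vzero n) by (apply N_def; lra).
      assert (Hi0 : Cmod (wl i0) <= 0).
      { apply (le0_of_lim _ r); auto. intros m. pose proof (Hwl i0 m) as H2.
        rewrite /= (proj1 (Hws m) i0 (leqnn _)) in H2.
        replace (Cminus (RtoC 0) (wl i0)) with (Copp (wl i0)) in H2 by
          (apply injective_projections; unfold RtoC, Cminus, Cplus, Copp; simpl; ring).
        rewrite Cmod_opp in H2. exact H2. }
      assert (H2 : wl i0 = RtoC 0) by (apply Cmod_eq_0; pose proof (Cmod_ge_0 (wl i0)); lra).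
      assert (E1 := f_equal (fun f => fst (f i0)) Ez). simpl in E1.
      unfold vsub, vzero, e0, unitv in E1. rewrite eqxx H2 in E1. simpl in E1. lra. }
    destruct D as [d [hd Hd]].
    exists (/ d + Cc * (1 + N e0 / d)). split.
    { pose proof (N_nonneg N HN e0). assert (0 < / d) by (apply Rinv_0_lt_compat; auto).
      assert (0 <= N e0 / d) by (unfold Rdiv; apply Rmult_le_pos; lra). nra. }
    intros v Hv i.
    set (a := v i0). set (v' := vsub v (vscal a e0)).
    assert (Hv' : supp k v').
    { intros j Hj. unfold v', vsub, vscal, e0, unitv.
      destruct (j == i0) eqn:Ej.
      - move/eqP: Ej => ->. fold a. apply injective_projections; unfold RtoC, Cminus, Cplus, Copp, Cmult; simpl; ring.
      - rewrite Hv.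
        + apply injective_projections; unfold RtoC, Cminus, Cplus, Copp, Cmult; simpl; ring.
        + rewrite leq_eqVlt in Hj. move/orP: Hj => [Hj|Hj]; auto.
          exfalso. move/eqP: Hj => Hj. move/negP: Ej; apply. apply/eqP; apply val_inj. simpl. auto. }
    assert (Ha : Cmod a * d <= N v).
    { destruct (Ceq_dec a (RtoC 0)) as [a0|a0].
      - rewrite a0 Cmod_0. pose proof (N_nonneg N HN v). lra.
      - set (w := vscal (Copp (Cinv a)) v').
        assert (Hw : supp k w) by (intros j Hj; unfold w, vscal; rewrite Hv'; auto;
          apply injective_projections; unfold RtoC, Cmult; simpl; ring).
        assert (Ev : v = vscal a (vsub e0 w)).
        { apply vext; intros j. unfold w, v', vscal, vsub. field. exact a0. }
        rewrite Ev (N_scal N HN). apply Rmult_le_compat_l; [apply Cmod_ge_0|]. apply Hd; auto. }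
    assert (Hv'N : N v' <= N v + Cmod a * N e0).
    { unfold v'. eapply Rle_trans; [apply N_sub_le|]. rewrite (N_scal N HN). lra. }
    pose proof (N_nonneg N HN v). pose proof (N_nonneg N HN e0).
    assert (Ha' : Cmod a <= / d * N v).
    { apply (Rmult_le_reg_r d); auto. replace (/ d * N v * d) with (N v) by (field; lra). exact Ha. }
    destruct (i == i0) eqn:Ei.
    + move/eqP: Ei => ->. fold a. assert (0 <= Cc * (1 + N e0 / d) * N v).
      { apply Rmult_le_pos; auto. apply Rmult_le_pos; [lra|]. assert (0 <= N e0 / d) by (unfold Rdiv; apply Rmult_le_pos; [lra|left; apply Rinv_0_lt_compat; auto]). lra. }
      nra.
    + assert (Evi : v i = v' i).
      { unfold v', vsub, vscal, e0, unitv. rewrite Ei. apply injective_projections; unfold RtoC, Cminus, Cplus, Copp, Cmult; simpl; ring. }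
      rewrite Evi. eapply Rle_trans; [apply HIH; auto|].
      assert (Cmod a * N e0 <= / d * N v * N e0) by (apply Rmult_le_compat_r; auto).
      assert (0 < / d) by (apply Rinv_0_lt_compat; auto).
      replace ((/ d + Cc * (1 + N e0 / d)) * N v) with (/ d * N v + Cc * (N v + / d * N v * N e0)) by (unfold Rdiv; ring).
      assert (Cc * N v' <= Cc * (N v + / d * N v * N e0)) by (apply Rmult_le_compat_l; lra).
      assert (0 <= / d * N v) by (apply Rmult_le_pos; lra). lra.
Qed.

Lemma LB : exists Cc, 0 < Cc /\ forall v i, Cmod (v i) <= Cc * N v.
Proof.
  destruct (LB_k n (leqnn n)) as [Cc [H1 H2]]. exists Cc; split; auto.
  intros v i. apply H2. intros j Hj. exfalso. move: (ltn_ord j). rewrite ltnNge Hj. done.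
Qed.

End LBsec.
Lemma common_delta {n} (s : R) (P : 'I_n -> R -> Prop) :
  (forall i, exists d, 0 < d /\ forall u, Rabs (u - s) < d -> P i u) ->
  exists d, 0 < d /\ forall u, Rabs (u - s) < d -> forall i, P i u.
Proof.
  intros H.
  assert (Hk : forall k, exists d, 0 < d /\ forall u, Rabs (u - s) < d -> forall i : 'I_n, (i < k)%N -> P i u).
  { induction k as [|k [d [hd IH]]].
    - exists 1; split; [lra|]. intros u _ i Hi. by rewrite ltn0 in Hi.
    - destruct (k < n)%N eqn:Hkn.
      + destruct (H (Ordinal Hkn)) as [d' [hd' H']].
        exists (Rmin d d'); split; [apply Rmin_pos; auto|].
        intros u Hu i Hi. rewrite ltnS leq_eqVlt in Hi. move/orP: Hi => [Hi|Hi].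
        * have -> : i = Ordinal Hkn by apply val_inj; apply/eqP.
          apply H'. eapply Rlt_le_trans; [exact Hu|apply Rmin_r].
        * apply IH; auto. eapply Rlt_le_trans; [exact Hu|apply Rmin_l].
      + exists d; split; [exact hd|]. intros u Hu i Hi. apply IH; auto.
        apply: (leq_trans (ltn_ord i)). by rewrite leqNgt Hkn. }
  destruct (Hk n) as [d [hd Hd]]. exists d; split; [exact hd|]. intros u Hu i. apply Hd; auto.
Qed.

Section MVIsec.
Context {n : nat} (N : cvec n -> R) (HN : is_norm N).
Context (phi phi1 : R -> cvec n) (Hphi : forall s i, derC (fun u => phi u i) s (phi1 s i)).
Context (G G1 : R -> R) (HG : forall s, is_derive G s (G1 s)) (Hb : forall s, N (phi1 s) <= G1 s).

Lemma LOC s e : 0 < e -> exists d, 0 < d /\ forall u, Rabs (u - s) < d ->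
  N (vsub (vsub (phi u) (phi s)) (vscal (RtoC (u - s)) (phi1 s))) <= e * Rabs (u - s).
Proof.
  intros he. destruct (UB N HN) as [K [HK HUB]].
  set (e' := e / (K + 1)).
  assert (he' : 0 < e') by (apply Rdiv_lt_0_compat; lra).
  destruct (common_delta s (fun i u => Cmod (Cminus (Cminus (phi u i) (phi s i)) (Cmult (RtoC (u - s)) (phi1 s i))) <= e' * Rabs (u - s))) as [d [hd Hd]].
  { intros i. apply (derC_eps (fun u => phi u i)); auto. }
  exists d; split; [exact hd|]. intros u Hu.
  eapply Rle_trans; [apply HUB; intros i; apply (Hd u Hu i)|].
  pose proof (Rabs_pos (u - s)).
  assert (K * e' <= e) by (unfold e'; apply (Rmult_le_reg_r (K + 1)); [lra|]; field_simplify; nra).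
  nra.
Qed.

Lemma pair_bound c e : 0 < e -> exists d, 0 < d /\ forall u1 u2, u1 <= c <= u2 ->
  Rabs (u1 - c) < d -> Rabs (u2 - c) < d ->
  N (vsub (phi u2) (phi u1)) <= G u2 - G u1 + e * (u2 - u1).
Proof.
  intros he.
  destruct (LOC c (e/2)) as [d1 [hd1 H1]]; [lra|].
  destruct (derR_eps G c (G1 c) (HG c) (e/2)) as [d2 [hd2 H2]]; [lra|].
  exists (Rmin d1 d2); split; [apply Rmin_pos; auto|].
  intros u1 u2 Hu Hu1 Hu2.
  assert (A1 := H1 u1 (Rlt_le_trans _ _ _ Hu1 (Rmin_l _ _))).
  assert (A2 := H1 u2 (Rlt_le_trans _ _ _ Hu2 (Rmin_l _ _))).
  assert (B1 := H2 u1 (Rlt_le_trans _ _ _ Hu1 (Rmin_r _ _))).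
  assert (B2 := H2 u2 (Rlt_le_trans _ _ _ Hu2 (Rmin_r _ _))).
  set (X1 := vsub (vsub (phi u1) (phi c)) (vscal (RtoC (u1 - c)) (phi1 c))) in *.
  set (X2 := vsub (vsub (phi u2) (phi c)) (vscal (RtoC (u2 - c)) (phi1 c))) in *.
  assert (E : vsub (phi u2) (phi u1) = vadd (vsub X2 X1) (vscal (RtoC (u2 - u1)) (phi1 c))).
  { apply vext; intros i. unfold X1, X2, vadd, vsub, vscal.
    apply injective_projections; unfold RtoC, Cminus, Cplus, Copp, Cmult; simpl; ring. }
  rewrite E. eapply Rle_trans; [apply (N_tri N HN)|].
  eapply Rle_trans; [apply Rplus_le_compat_r; apply (N_sub_le N HN)|].
  rewrite (N_scal N HN) Cmod_R.
  assert (r1 : Rabs (u2 - u1) = u2 - u1) by (apply Rabs_right; lra).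
  assert (r2 : Rabs (u2 - c) = u2 - c) by (apply Rabs_right; lra).
  assert (r3 : Rabs (u1 - c) = - (u1 - c)) by (apply Rabs_left1; lra).
  rewrite r2 in A2 B2. rewrite r3 in A1 B1. rewrite r1.
  pose proof (Hb c).
  assert ((u2 - u1) * N (phi1 c) <= (u2 - u1) * G1 c) by (apply Rmult_le_compat_l; lra).
  apply Rabs_le_between' in B1. apply Rabs_le_between' in B2.
  nra.
Qed.

Lemma MVI a b : a <= b -> N (vsub (phi b) (phi a)) <= G b - G a.
Proof.
  intros Hab.
  assert (Main : forall e, 0 < e -> N (vsub (phi b) (phi a)) <= G b - G a + e * (b - a)).
  { intros e he.
    set (P := fun u => N (vsub (phi u) (phi a)) <= G u - G a + e * (u - a)).
    set (E := fun x => a <= x <= b /\ forall u, a <= u <= x -> P u).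
    assert (Pa : P a).
    { unfold P. replace (vsub (phi a) (phi a)) with (vzero n).
      - rewrite (N_zero N HN). lra.
      - apply vext; intros i; unfold vsub, vzero. apply injective_projections; unfold RtoC, Cminus, Cplus, Copp; simpl; ring. }
    assert (Ea : E a) by (split; [lra|]; intros u Hu; replace u with a by lra; exact Pa).
    assert (Eb : bound E) by (exists b; intros x [Hx _]; lra).
    destruct (completeness E Eb (ex_intro _ a Ea)) as [c [Hc1 Hc2]].
    assert (hac : a <= c) by (apply Hc1; exact Ea).
    assert (hcb : c <= b) by (apply Hc2; intros x [Hx _]; lra).
    destruct (pair_bound c e he) as [d [hd Hd]].
    assert (Hu1 : exists u1, E u1 /\ c - d < u1).
    { apply Classical_Prop.NNPP. intros Hno.
      assert (c <= c - d); [|lra]. apply Hc2. intros x Ex. apply Rnot_lt_le. intros Hx. apply Hno. exists x. auto. }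
    destruct Hu1 as [u1 [Eu1 Hu1]].
    assert (hu1c : u1 <= c) by (apply Hc1; exact Eu1).
    set (m := Rmin b (c + d / 2)).
    assert (Em : E m).
    { split. { unfold m. split; [apply Rmin_glb; lra| apply Rmin_l]. }
      intros u Hu.
      destruct (Rlt_le_dec u c) as [Huc|Huc].
      - assert (exists y, E y /\ u < y) as [y [Ey Hy]].
        { apply Classical_Prop.NNPP. intros Hno. assert (c <= u); [|lra]. apply Hc2. intros x Ex.
          apply Rnot_lt_le. intros Hx. apply Hno. exists x. auto. }
        apply (proj2 Ey). lra.
      - assert (hum : u <= c + d / 2) by (eapply Rle_trans; [apply Hu| apply Rmin_r]).
        assert (B := Hd u1 u (conj hu1c Huc) ltac:(apply Rabs_def1; lra) ltac:(apply Rabs_def1; lra)).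
        assert (P1 : P u1) by (apply (proj2 Eu1); destruct Eu1 as [[h1 h2] _]; lra).
        unfold P in *. eapply Rle_trans; [apply (N_sub_tri N HN _ (phi u1))|]. lra. }
    assert (hmc : m <= c) by (apply Hc1; exact Em).
    assert (hm : m = b).
    { revert hmc. unfold m, Rmin. destruct (Rle_dec b (c + d / 2)); lra. }
    rewrite hm in Em. apply (proj2 Em). lra. }
  apply Rle_plus_epsilon. intros eps heps.
  specialize (Main (eps / (b - a + 1))).
  assert (0 < eps / (b - a + 1)) by (apply Rdiv_lt_0_compat; lra).
  specialize (Main H).
  assert (eps / (b - a + 1) * (b - a) <= eps).
  { apply (Rmult_le_reg_r (b - a + 1)); [lra|]. field_simplify; nra. }
  lra.
Qed.

End MVIsec.
Lemma exp_bound a x : 0 < a -> 0 <= x -> exp (- (a * x)) <= / (Rmin 1 a * (x + 1)).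
Proof.
  intros ha hx. rewrite exp_Ropp. apply Rinv_le_contravar.
  - apply Rmult_lt_0_compat; [apply Rmin_pos; lra|lra].
  - pose proof (exp_ineq1_le (a * x)). pose proof (Rmin_l 1 a). pose proof (Rmin_r 1 a).
    pose proof (Rmin_pos 1 a Rlt_0_1 ha). nra.
Qed.

Lemma exp_lim a M e : 0 < a -> 0 < e -> exists Mn, forall p, (Mn <= p)%N -> M * exp (- (a * INR p)) < e.
Proof.
  intros ha he. destruct (Rle_lt_dec M 0) as [HM|HM].
  - exists 0%N. intros p _. pose proof (exp_pos (- (a * INR p))). nra.
  - destruct (inv_lim (M / Rmin 1 a) e he) as [Mn HMn]. exists Mn. intros p Hp.
    specialize (HMn p Hp). pose proof (pos_INR p).
    pose proof (exp_bound a (INR p) ha H).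
    pose proof (Rmin_pos 1 a Rlt_0_1 ha).
    assert (M * exp (- (a * INR p)) <= M * / (Rmin 1 a * (INR p + 1))) by (apply Rmult_le_compat_l; lra).
    replace (M / Rmin 1 a / (INR p + 1)) with (M * / (Rmin 1 a * (INR p + 1))) in HMn by (field; lra).
    lra.
Qed.

Lemma nat_above t : exists m : nat, t <= INR m.
Proof.
  destruct (Rle_lt_dec t 0) as [h|h].
  - exists 0%N. simpl. lra.
  - destruct (archimed_cor1 (/ t)) as [m [Hm Hm0]]; [apply Rinv_0_lt_compat; auto|].
    exists m. assert (0 < INR m) by (apply lt_0_INR; exact Hm0).
    left. apply Rinv_lt_cancel; auto.
Qed.

Section FOsec.
Context {n : nat} (N : cvec n -> R) (HN : is_norm N).

Lemma FOpos (lam : C) (dl : R) (eta eta1 : R -> cvec n) :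
  0 < Re lam ->
  (forall t i, derC (fun s => eta s i) t (eta1 t i)) ->
  (forall t, N (vsub (eta1 t) (vscal lam (eta t))) <= dl) ->
  exists c : cvec n, forall t, N (vsub (eta t) (vscal (ex lam t) c)) <= dl / Re lam.
Proof.
  intros ha Hd Hh. set (a := Re lam) in *.
  assert (hdl : 0 <= dl) by (pose proof (N_nonneg N HN (vsub (eta1 0) (vscal lam (eta 0)))); pose proof (Hh 0); lra).
  set (psi := fun s => vscal (ex (Copp lam) s) (eta s)).
  set (psi1 := fun s => vscal (ex (Copp lam) s) (vsub (eta1 s) (vscal lam (eta s)))).
  assert (Hpsi : forall s i, derC (fun u => psi u i) s (psi1 s i)).
  { intros s i. eapply derC_ext; [intros u; reflexivity| |apply (derC_mult _ _ s _ _ (derC_ex (Copp lam) s) (Hd s i))].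
    unfold psi1, vscal, vsub. match goal with |- ?A = ?B => change (@eq C A B) end. ring. }
  set (G := fun s => - (dl / a) * exp (- (a * s))).
  set (G1 := fun s => dl * exp (- (a * s))).
  assert (HG : forall s, is_derive G s (G1 s)).
  { intros s. unfold G, G1. auto_derive; auto. field. lra. }
  assert (Hb : forall s, N (psi1 s) <= G1 s).
  { intros s. unfold psi1, G1. rewrite (N_scal N HN) Cmod_ex.
    replace (Re (Copp lam) * s) with (- (a * s)) by (change (Re (Copp lam)) with (- Re lam); unfold a; ring).
    rewrite Rmult_comm. apply Rmult_le_compat_r; [left; apply exp_pos| apply Hh]. }
  assert (HM : forall S T, S <= T -> N (vsub (psi T) (psi S)) <= dl / a * exp (- (a * S))).
  { intros S T hST. eapply Rle_trans; [apply (MVI N HN psi psi1 Hpsi G G1 HG Hb S T hST)|].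
    unfold G. pose proof (exp_pos (- (a * T))).
    assert (0 <= dl / a) by (apply Rdiv_le_0_compat; lra). nra. }
  destruct (LB N HN) as [Cl [HCl HLB]].
  destruct (UB N HN) as [K [HK HUB]].
  set (r := fun m : nat => Cl * (dl / a) * exp (- (a * INR m))).
  assert (Hcau : forall i p q, (p <= q)%N -> Cmod (Cminus (psi (INR p) i) (psi (INR q) i)) <= r p).
  { intros i p q Hpq. pose proof (HLB (vsub (psi (INR p)) (psi (INR q))) i) as H1.
    unfold vsub in H1 at 1. eapply Rle_trans; [exact H1|].
    rewrite (N_sub_sym N HN). unfold r. rewrite Rmult_assoc. apply Rmult_le_compat_l; [lra|].
    apply HM. apply le_INR. apply/leP. exact Hpq. }
  assert (Hr : forall e, 0 < e -> exists M, forall p, (M <= p)%N -> r p < e).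
  { intros e he. destruct (exp_lim a (Cl * (dl / a)) e ha he) as [M HM']. exists M. exact HM'. }
  set (c' := fun i => proj1_sig (cauchy_C (fun m => psi (INR m) i) r (Hcau i) Hr)).
  assert (Hc' : forall i m, Cmod (Cminus (psi (INR m) i) (c' i)) <= r m).
  { intros i. exact (proj2_sig (cauchy_C (fun m => psi (INR m) i) r (Hcau i) Hr)). }
  assert (Hpc : forall t, N (vsub (psi t) c') <= dl / a * exp (- (a * t))).
  { intros t. apply Rle_plus_epsilon. intros e he.
    destruct (exp_lim a (K * (Cl * (dl / a))) e ha he) as [M1 HM1].
    destruct (nat_above t) as [m0 Hm0].
    set (m := maxn M1 m0).
    assert (Hmt : t <= INR m) by (eapply Rle_trans; [exact Hm0|]; apply le_INR; apply/leP; apply leq_maxr).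
    specialize (HM1 m (leq_maxl _ _)).
    eapply Rle_trans; [apply (N_sub_tri N HN _ (psi (INR m)))|].
    rewrite (N_sub_sym N HN (psi t)).
    pose proof (HM _ _ Hmt).
    assert (N (vsub (psi (INR m)) c') <= K * r m) by (apply HUB; intros i; apply Hc').
    unfold r in H0. rewrite <- !Rmult_assoc in HM1. lra. }
  exists c'. intros t.
  replace (vsub (eta t) (vscal (ex lam t) c')) with (vscal (ex lam t) (vsub (psi t) c')).
  - rewrite (N_scal N HN) Cmod_ex. fold a.
    eapply Rle_trans; [apply Rmult_le_compat_l; [left; apply exp_pos| apply Hpc]|].
    right. replace (exp (a * t) * (dl / a * exp (- (a * t)))) with (dl / a * (exp (a * t) * exp (- (a * t)))) by ring.
    rewrite <- exp_plus. replace (a * t + - (a * t)) with 0 by ring. rewrite exp_0. ring.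
  - apply vext; intros i. unfold psi, vscal, vsub.
    transitivity (Cminus (Cmult (Cmult (ex lam t) (ex (Copp lam) t)) (eta t i)) (Cmult (ex lam t) (c' i))); [ring|].
    rewrite ex_inv. ring.
Qed.

End FOsec.
Lemma ex_neg lam s : ex (Copp lam) (- s) = ex lam s.
Proof.
  unfold ex. change (Re (Copp lam)) with (- Re lam). change (Im (Copp lam)) with (- Im lam).
  replace (- Re lam * - s) with (Re lam * s) by ring. replace (- Im lam * - s) with (Im lam * s) by ring.
  reflexivity.
Qed.

Section FO2.
Context {n : nat} (N : cvec n -> R) (HN : is_norm N).

Lemma FO (lam : C) (dl : R) (eta eta1 : R -> cvec n) :
  Re lam <> 0 ->
  (forall t i, derC (fun s => eta s i) t (eta1 t i)) ->
  (forall t, N (vsub (eta1 t) (vscal lam (eta t))) <= dl) ->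
  exists c : cvec n, forall t, N (vsub (eta t) (vscal (ex lam t) c)) <= dl / Rabs (Re lam).
Proof.
  intros hl Hd Hh. destruct (Rlt_le_dec 0 (Re lam)) as [hp|hn].
  - rewrite Rabs_right; [|lra]. apply (FOpos N HN lam dl eta eta1); auto.
  - assert (hn' : Re lam < 0) by lra.
    set (et := fun s => eta (- s)).
    set (et1 := fun s => vscal (RtoC (-1)) (eta1 (- s))).
    assert (Hdt : forall t i, derC (fun s => et s i) t (et1 t i)).
    { intros t i. assert (K := is_derive_comp (fun s => eta s i) Ropp t (eta1 (- t) i) (-1) (Hd (- t) i) ltac:(auto_derive; auto; ring)).
      rewrite Cscal_mult in K. exact K. }
    assert (Hht : forall t, N (vsub (et1 t) (vscal (Copp lam) (et t))) <= dl).
    { intros t. replace (vsub (et1 t) (vscal (Copp lam) (et t))) with (vscal (RtoC (-1)) (vsub (eta1 (- t)) (vscal lam (eta (- t))))).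
      - rewrite (N_scal N HN) Cmod_R Rabs_Ropp Rabs_R1 Rmult_1_l. apply Hh.
      - apply vext; intros i; unfold et, et1, vscal, vsub. ring. }
    destruct (FOpos N HN (Copp lam) dl et et1 ltac:(change (0 < - Re lam); lra) Hdt Hht) as [c Hc].
    exists c. intros t. specialize (Hc (- t)). unfold et in Hc. rewrite Ropp_involutive ex_neg in Hc.
    rewrite Rabs_left; auto.
Qed.

End FO2.
Ltac ceq := cbv beta; match goal with |- ?A = ?B => change (@eq C A B) end.

Lemma derC_scal (f : R -> C) c t a : derC f t a -> derC (fun s => Cmult c (f s)) t (Cmult c a).
Proof.
  intros H. eapply derC_ext; [intros s; reflexivity| |apply (derC_mult _ _ t _ _ (derC_const c t) H)].
  ceq. ring.
Qed.

Lemma derC_sub (f g : R -> C) t a b : derC f t a -> derC g t b -> derC (fun s => Cminus (f s) (g s)) t (Cminus a b).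
Proof.
  intros Hf Hg. eapply derC_ext; [| |apply (derC_plus _ _ t _ _ Hf (derC_scal _ (Copp (RtoC 1)) t _ Hg))].
  - intros s. ceq. ring.
  - ceq. ring.
Qed.

Lemma derC_vcoef (f : R -> C) (c : C) t a : derC f t a -> derC (fun s => Cmult (f s) c) t (Cmult a c).
Proof.
  intros H. eapply derC_ext; [intros s; reflexivity| |apply (derC_mult _ _ t _ _ H (derC_const c t))].
  ceq. ring.
Qed.

Theorem corollary3p2 (n : nat) (N : cvec n -> R) (a0 a1 a2 lam1 lam2 : C) :
  is_norm N ->
  a0 <> RtoC 0 ->
  (forall z : C, Cplus (Cplus (Cmult a0 (Cmult z z)) (Cmult a1 z)) a2
                 = Cmult a0 (Cmult (Cminus z lam1) (Cminus z lam2))) ->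
  Re lam1 * Re lam2 <> 0 ->
  UlamStable N (fun _ => a0) (fun _ => a1) (fun _ => a2) (fun _ => vzero n) /\
  UlamConstant N (fun _ => a0) (fun _ => a1) (fun _ => a2) (fun _ => vzero n)
    (1 / Rabs (Cmod a0 * Re lam1 * Re lam2)).
Proof.
  intros HN Ha0 Hpoly Hre.
  assert (E2 : a2 = Cmult a0 (Cmult lam1 lam2)).
  { replace a2 with (Cplus (Cplus (Cmult a0 (Cmult (RtoC 0) (RtoC 0))) (Cmult a1 (RtoC 0))) a2) by ring.
    rewrite Hpoly. ring. }
  assert (E1 : a1 = Copp (Cmult a0 (Cplus lam1 lam2))).
  { replace a1 with (Cminus (Cminus (Cplus (Cplus (Cmult a0 (Cmult (RtoC 1) (RtoC 1))) (Cmult a1 (RtoC 1))) a2) a0) a2) by ring.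
    rewrite Hpoly E2. ring. }
  assert (hl1 : Re lam1 <> 0) by (intros h; apply Hre; rewrite h; ring).
  assert (hl2 : Re lam2 <> 0) by (intros h; apply Hre; rewrite h; ring).
  assert (hm0 : Cmod a0 <> 0) by (intros h; apply Ha0; apply Cmod_eq_0; exact h).
  assert (hm0' : 0 < Cmod a0) by (pose proof (Cmod_ge_0 a0); lra).
  assert (HC : UlamConstant N (fun _ => a0) (fun _ => a1) (fun _ => a2) (fun _ => vzero n)
    (1 / Rabs (Cmod a0 * Re lam1 * Re lam2))).
  { split.
    { apply Rdiv_lt_0_compat; [lra|]. apply Rabs_pos_lt.
      apply Rmult_integral_contrapositive_currified; [apply Rmult_integral_contrapositive_currified|]; auto. }
    intros eps heps xi xi1 xi2 [Hx1 [Hx2 Hx3]] Hbnd.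
    set (eta := fun t => vsub (xi1 t) (vscal lam2 (xi t))).
    set (eta1 := fun t => vsub (xi2 t) (vscal lam2 (xi1 t))).
    assert (Hde : forall t i, derC (fun s => eta s i) t (eta1 t i)).
    { intros t i. apply (derC_sub (fun s => xi1 s i) (fun s => Cmult lam2 (xi s i))); auto.
      apply derC_scal. auto. }
    assert (Hbe : forall t, N (vsub (eta1 t) (vscal lam1 (eta t))) <= eps / Cmod a0).
    { intros t. specialize (Hbnd t). rewrite (N_sub0 N) in Hbnd.
      replace (vsub (eta1 t) (vscal lam1 (eta t))) with (vscal (Cinv a0) (lhs (fun _ => a0) (fun _ => a1) (fun _ => a2) xi xi1 xi2 t)).
      - rewrite (N_scal N HN) (Cmod_inv _ Ha0). unfold Rdiv. rewrite Rmult_comm. apply Rmult_le_compat_r; auto.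
        left; apply Rinv_0_lt_compat; auto.
      - apply vext; intros i. unfold lhs, eta, eta1, vscal, vsub, vadd. rewrite E1 E2. field. exact Ha0. }
    destruct (FO N HN lam1 _ eta eta1 hl1 Hde Hbe) as [c1 Hc1].
    assert (Hab : exists al be : C, Cplus be (Cmult (Cminus lam1 lam2) al) = RtoC 1 /\ Cmult (Cminus lam1 lam2) be = RtoC 0).
    { destruct (Ceq_dec lam1 lam2) as [e|e].
      - exists (RtoC 0), (RtoC 1). rewrite e. split; ring.
      - exists (Cinv (Cminus lam1 lam2)), (RtoC 0). split; [field|ring].
        intros h; apply e. replace lam1 with (Cplus (Cminus lam1 lam2) lam2) by ring. rewrite h. ring. }
    destruct Hab as [al [be [Hab1 Hab2]]].
    set (q := fun t : R => Cmult (Cplus al (Cmult be (RtoC t))) (ex lam1 t)).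
    set (q1 := fun t : R => Cplus (Cmult be (ex lam1 t)) (Cmult lam1 (q t))).
    set (q2 := fun t : R => Cplus (Cmult (Cmult (RtoC 2) (Cmult be lam1)) (ex lam1 t)) (Cmult (Cmult lam1 lam1) (q t))).
    assert (Dq : forall t, derC q t (q1 t)).
    { intros t. eapply derC_ext; [intros s; reflexivity| |].
      2: { apply derC_mult; [|apply derC_ex]. apply derC_plus; [apply derC_const|]. apply derC_scal. apply derC_id. }
      unfold q1, q. ceq. ring. }
    assert (Dq1 : forall t, derC q1 t (q2 t)).
    { intros t. eapply derC_ext; [intros s; reflexivity| |].
      2: { apply derC_plus; apply derC_scal; [apply derC_ex|apply Dq]. }
      unfold q2, q1. ceq. ring. }
    assert (Dq2 : forall t, exists l, derC q2 t l).
    { intros t. eexists. apply derC_plus; apply derC_scal; [apply derC_ex|apply Dq]. }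
    assert (Hq : forall t, Cminus (q1 t) (Cmult lam2 (q t)) = ex lam1 t).
    { intros t. unfold q1, q.
      transitivity (Cmult (Cplus (Cplus be (Cmult (Cminus lam1 lam2) al)) (Cmult (Cmult (Cminus lam1 lam2) be) (RtoC t))) (ex lam1 t)); [ring|].
      rewrite Hab1 Hab2. ring. }
    assert (Hq2 : forall t, Cplus (Cminus (q2 t) (Cmult (Cplus lam1 lam2) (q1 t))) (Cmult (Cmult lam1 lam2) (q t)) = RtoC 0).
    { intros t. unfold q2, q1.
      transitivity (Cmult (Cmult (Cminus lam1 lam2) be) (ex lam1 t)); [ring|]. rewrite Hab2. ring. }
    clearbody q q1 q2.
    set (zeta := fun t => vsub (xi t) (vscal (q t) c1)).
    set (zeta1 := fun t => vsub (xi1 t) (vscal (q1 t) c1)).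
    assert (Hdz : forall t i, derC (fun s => zeta s i) t (zeta1 t i)).
    { intros t i. apply (derC_sub (fun s => xi s i) (fun s => Cmult (q s) (c1 i))); auto.
      apply derC_vcoef. apply Dq. }
    assert (Hbz : forall t, N (vsub (zeta1 t) (vscal lam2 (zeta t))) <= eps / Cmod a0 / Rabs (Re lam1)).
    { intros t. replace (vsub (zeta1 t) (vscal lam2 (zeta t))) with (vsub (eta t) (vscal (ex lam1 t) c1)); [apply Hc1|].
      apply vext; intros i. unfold zeta, zeta1, eta, vsub, vscal. rewrite <- (Hq t). ring. }
    destruct (FO N HN lam2 _ zeta zeta1 hl2 Hdz Hbz) as [c2 Hc2].
    exists (fun t => vadd (vscal (q t) c1) (vscal (ex lam2 t) c2)). split.
    - exists (fun t => vadd (vscal (q1 t) c1) (vscal (Cmult lam2 (ex lam2 t)) c2)).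
      exists (fun t => vadd (vscal (q2 t) c1) (vscal (Cmult (Cmult lam2 lam2) (ex lam2 t)) c2)).
      split; [split; [|split]|].
      + intros t i. unfold vadd, vscal. apply derC_plus; apply derC_vcoef; [apply Dq|apply derC_ex].
      + intros t i. unfold vadd, vscal. apply derC_plus; apply derC_vcoef; [apply Dq1|].
        eapply derC_ext; [intros s; reflexivity| |apply derC_scal; apply derC_ex]. ceq. ring.
      + intros t i.
        assert (Hex : @ex_derive R_AbsRing C_R_NormedModule (fun s => vadd (vscal (q2 s) c1) (vscal (Cmult (Cmult lam2 lam2) (ex lam2 s)) c2) i) t).
        { destruct (Dq2 t) as [l Hl]. unfold vadd, vscal. eexists. apply derC_plus; apply derC_vcoef.
          * exact Hl.
          * apply derC_scal. apply derC_ex. }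
        exact (@ex_derive_continuous R_AbsRing C_R_NormedModule _ t Hex).
      + intros t. apply vext; intros i. unfold lhs, vadd, vscal, vzero. rewrite E1 E2.
        transitivity (Cplus (Cmult a0 (Cmult (Cplus (Cminus (q2 t) (Cmult (Cplus lam1 lam2) (q1 t))) (Cmult (Cmult lam1 lam2) (q t))) (c1 i)))
                            (Cmult a0 (Cmult (Cplus (Cminus (Cmult lam2 lam2) (Cmult (Cplus lam1 lam2) lam2)) (Cmult lam1 lam2)) (Cmult (ex lam2 t) (c2 i))))); [ring|].
        rewrite Hq2. ring.
    - intros t. specialize (Hc2 t).
      replace (vsub (xi t) (vadd (vscal (q t) c1) (vscal (ex lam2 t) c2))) with (vsub (zeta t) (vscal (ex lam2 t) c2)).
      + eapply Rle_trans; [exact Hc2|]. right.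
        rewrite !Rabs_mult (Rabs_right (Cmod a0)); [|lra].
        pose proof (Rabs_pos_lt _ hl1). pose proof (Rabs_pos_lt _ hl2).
        field. split; lra.
      + apply vext; intros i. unfold zeta, vsub, vadd, vscal. ring. }
  split; [exists (1 / Rabs (Cmod a0 * Re lam1 * Re lam2)); exact HC| exact HC].
Qed.
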